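(* Among all allowed 3-stick folded ribbon unknots $K_{w,F}$ in which the folds at all three vertices are of the same type, the minimum ribbonlength is $3\sqrt{3}$, and it is attained when the knot diagram is an equilateral triangle.
   Context: For an oriented polygonal knot diagram $K$ that is a triangle with vertices $v_1,v_2,v_3$ and edges $e_i=[v_i,v_{i+1}]$ (indices mod 3), the fold angle $\theta_i\in[0,\pi]$ at $v_i$ is the angle between $e_{i-1}$ and $e_i$. The folded ribbon $K_w$ of width $w$ has at each $v_i$ a fold line of length $w/\cos(\theta_i/2)$ centered at $v_i$ perpendicular to the bisector of $\theta_i$, with boundary segments parallel to and at distance $w/2$ from each edge joining consecutive fold lines. Folding information $F$ records at each vertex whether the ribbon of $e_i$ lies over (overfold) or under (underfold) the ribbon of $e_{i-1}$; folds of the same type means all overfolds or all underfolds. $K_{w,F}$ is allowed if the ribbon is immersed away from fold lines and admits crossing information (a continuous, antisymmetric, transitive $\pm1$-valued function on pairs of distinct points of the ribbon with the same planar image) agreeing with $F$. The ribbonlength is $\operatorname{length}(K)/w$.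
   Formalization: The folded ribbon $K_w$ is taken open, without its boundary segments: each piece consists of points at distance less than $w/2$ from the line of its edge, and fold lines omit their endpoints. Apart from conventions, each condition added here is assumed in the paper as well or is needed for the statement above to hold. *)

(* Defs.v *)
From Stdlib Require Import Reals Lra Arith ZArith.
Open Scope R_scope.

Definition pt := (R * R)%type.
Definition vadd (p q : pt) : pt := (fst p + fst q, snd p + snd q).
Definition vsub (p q : pt) : pt := (fst p - fst q, snd p - snd q).
Definition vscale (l : R) (p : pt) : pt := (l * fst p, l * snd p).
Definition dot (p q : pt) : R := fst p * fst q + snd p * snd q.
Definition cross (p q : pt) : R := fst p * snd q - snd p * fst q.
Definition norm (p : pt) : R := sqrt (dot p p).
Definition dist (p q : pt) : R := norm (vsub p q).
Definition unitv (p : pt) : pt := (fst p / norm p, snd p / norm p).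
Definition perp (p : pt) : pt := (- snd p, fst p).

(* The triangle knot diagram with vertices v_0 = a, v_1 = b, v_2 = c;
   indices are taken mod 3, edge e_i = [v_i, v_(i+1)]. *)
Definition vert (a b c : pt) (i : nat) : pt :=
  match Nat.modulo i 3 with 0%nat => a | 1%nat => b | _ => c end.

Definition prev (i : nat) : nat := Nat.modulo (i + 2) 3.
Definition next (i : nat) : nat := Nat.modulo (i + 1) 3.

Definition is_triangle (a b c : pt) : Prop := cross (vsub b a) (vsub c a) <> 0.

Definition equilateral (a b c : pt) : Prop :=
  dist a b = dist b c /\ dist b c = dist c a.

Definition fold_angle (a b c : pt) (i : nat) : R :=
  let u := vsub (vert a b c (prev i)) (vert a b c i) in
  let u' := vsub (vert a b c (i + 1)) (vert a b c i) in
  acos (dot u u' / (norm u * norm u')).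

Definition bis (a b c : pt) (i : nat) : pt :=
  vadd (unitv (vsub (vert a b c (prev i)) (vert a b c i)))
       (unitv (vsub (vert a b c (i + 1)) (vert a b c i))).

(* The fold line at v_i: the segment of length w / cos(theta_i / 2) centred at
   v_i and perpendicular to the bisector.  (Relative) interior of the segment:
   the ribbon is taken without its boundary edges. *)
Definition on_fold (a b c : pt) (w : R) (i : nat) (p : pt) : Prop :=
  exists l : R, Rabs l < w / (2 * cos (fold_angle a b c i / 2)) /\
    p = vadd (vert a b c i) (vscale l (unitv (perp (bis a b c i)))).

Definition in_strip (a b c : pt) (w : R) (i : nat) (p : pt) : Prop :=
  Rabs (cross (unitv (vsub (vert a b c (i + 1)) (vert a b c i)))
              (vsub p (vert a b c i))) < w / 2.

(* the ribbon piece of edge e_i: the part of the strip lying between the fold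
   line at v_i and the fold line at v_(i+1) *)
Definition piece (a b c : pt) (w : R) (i : nat) (p : pt) : Prop :=
  in_strip a b c w i p /\
  0 <= dot (vsub p (vert a b c i)) (bis a b c i) /\
  0 <= dot (vsub p (vert a b c (i + 1))) (bis a b c (i + 1)).

(* immersion away from the fold lines: the two fold lines bounding the ribbon
   of e_i do not cross inside the ribbon of e_i (so each piece is a genuine
   trapezoid, mapped injectively into the plane) *)
Definition immersed (a b c : pt) (w : R) : Prop :=
  forall i : nat, (i < 3)%nat -> forall p : pt, in_strip a b c w i p ->
    ~ (dot (vsub p (vert a b c i)) (bis a b c i) < 0 /\
       dot (vsub p (vert a b c (i + 1))) (bis a b c (i + 1)) < 0).

(* Points of the ribbon K_w: pairs (i, p) with p in the piece of e_i
   (p is the planar image of the point). *)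
Definition rpt := (nat * pt)%type.

Definition is_rpt (a b c : pt) (w : R) (x : rpt) : Prop :=
  (fst x < 3)%nat /\ piece a b c w (fst x) (snd x).

(* two representatives denote the same point of the ribbon: same piece and same
   position, or adjacent pieces glued along the common fold line *)
Definition same_rpt (a b c : pt) (w : R) (x y : rpt) : Prop :=
  snd x = snd y /\
  (fst x = fst y \/
   (fst y = next (fst x) /\ on_fold a b c w (fst y) (snd x)) \/
   (fst x = next (fst y) /\ on_fold a b c w (fst x) (snd x))).

Definition overlap (a b c : pt) (w : R) (x y : rpt) : Prop :=
  is_rpt a b c w x /\ is_rpt a b c w y /\ snd x = snd y /\ ~ same_rpt a b c w x y.

(* basic neighbourhoods of x in the ribbon (intrinsic topology of the glued
   ribbon): points x' whose image is delta-close, lying in the piece of x or in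
   a piece glued to x along a fold line through x *)
Definition rnear (a b c : pt) (w : R) (delta : R) (x x' : rpt) : Prop :=
  dist (snd x) (snd x') < delta /\ same_rpt a b c w x (fst x', snd x).

(* crossing information: eps x y = 1 means x lies over y, -1 means under *)
Definition crossing_info (a b c : pt) (w : R) (eps : rpt -> rpt -> Z) : Prop :=
  (forall x y, overlap a b c w x y -> eps x y = 1%Z \/ eps x y = (-1)%Z) /\
  (forall x x' y y', overlap a b c w x y -> is_rpt a b c w x' -> is_rpt a b c w y' ->
     same_rpt a b c w x x' -> same_rpt a b c w y y' -> eps x' y' = eps x y) /\
  (forall x y, overlap a b c w x y -> eps y x = (- eps x y)%Z) /\
  (forall x y z, overlap a b c w x y -> overlap a b c w y z -> overlap a b c w x z ->
     eps x y = 1%Z -> eps y z = 1%Z -> eps x z = 1%Z) /\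
  (* continuous (i.e. locally constant) on the set of such pairs *)
  (forall x y, overlap a b c w x y -> exists delta, 0 < delta /\
     forall x' y', overlap a b c w x' y' -> rnear a b c w delta x x' ->
       rnear a b c w delta y y' -> eps x' y' = eps x y).

(* folding information F: F i = true iff the fold at v_i is an overfold, i.e.
   the ribbon of e_i lies over the ribbon of e_(i-1) there. *)
Definition agrees (a b c : pt) (w : R) (F : nat -> bool) (eps : rpt -> rpt -> Z) : Prop :=
  forall i : nat, (i < 3)%nat -> exists delta, 0 < delta /\
    forall p : pt, is_rpt a b c w (i, p) -> is_rpt a b c w (prev i, p) ->
      (exists q, on_fold a b c w i q /\ dist p q < delta) ->
      ~ same_rpt a b c w (i, p) (prev i, p) ->
      eps (i, p) (prev i, p) = (if F i then 1%Z else (-1)%Z).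

Definition same_type (F : nat -> bool) : Prop := F 0%nat = F 1%nat /\ F 1%nat = F 2%nat.

Definition allowed (a b c : pt) (w : R) (F : nat -> bool) : Prop :=
  is_triangle a b c /\ 0 < w /\ immersed a b c w /\
  exists eps, crossing_info a b c w eps /\ agrees a b c w F eps.

Definition ribbonlength (a b c : pt) (w : R) : R :=
  (dist a b + dist b c + dist c a) / w.

(* Main.v *)
Require Import Defs.
From Stdlib Require Import Reals Lra Lia Psatz ZArith Classical.
Open Scope R_scope.

Lemma dot_self_ge0 v : 0 <= dot v v.
Proof. destruct v as [x y]; unfold dot; simpl; nra. Qed.
Lemma norm_ge0 v : 0 <= norm v.
Proof. apply sqrt_pos. Qed.
Lemma norm_sq v : norm v * norm v = dot v v.
Proof. apply sqrt_sqrt, dot_self_ge0. Qed.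
Lemma norm_pos v : dot v v <> 0 -> 0 < norm v.
Proof. intro H. apply sqrt_lt_R0. pose proof (dot_self_ge0 v). lra. Qed.
Lemma cross_unitv v q : cross (unitv v) q = cross v q / norm v.
Proof. destruct v, q; unfold cross, unitv; simpl; unfold Rdiv; ring. Qed.
Lemma dot_vadd_unitv q u u' :
  dot q (vadd (unitv u) (unitv u')) = dot q u / norm u + dot q u' / norm u'.
Proof. destruct q, u, u'; unfold dot, vadd, unitv; simpl; unfold Rdiv; ring. Qed.
Lemma norm_vsub_sym p q : norm (vsub p q) = norm (vsub q p).
Proof. unfold norm; f_equal; destruct p, q; unfold dot, vsub; simpl; ring. Qed.
Lemma lagrange u v : dot u v * dot u v + cross u v * cross u v = dot u u * dot v v.
Proof. destruct u, v; unfold dot, cross; simpl; ring. Qed.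
Lemma dot0_cross0 u v : dot u u = 0 -> cross u v = 0.
Proof. destruct u as [u1 u2], v; unfold dot, cross; simpl; intro H.
  assert (u1 = 0) by nra. assert (u2 = 0) by nra. subst; ring. Qed.
Lemma dot0_cross0' u v : dot v v = 0 -> cross u v = 0.
Proof. destruct u, v as [v1 v2]; unfold dot, cross; simpl; intro H.
  assert (v1 = 0) by nra. assert (v2 = 0) by nra. subst; ring. Qed.

Lemma corner_dot P Q S p x y :
  fst p - fst Q = x*(fst P - fst Q) + y*(fst S - fst Q) ->
  snd p - snd Q = x*(snd P - snd Q) + y*(snd S - snd Q) ->
  cross (vsub P Q) (vsub S Q) <> 0 -> 0 <= x -> 0 <= y ->
  0 <= dot (vsub p Q) (vadd (unitv (vsub P Q)) (unitv (vsub S Q))) /\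
  (0 < x + y -> 0 < dot (vsub p Q) (vadd (unitv (vsub P Q)) (unitv (vsub S Q)))).
Proof.
  intros H1 H2 HX Hx Hy. rewrite dot_vadd_unitv.
  assert (HP : dot (vsub P Q) (vsub P Q) <> 0) by (intro E; apply HX, dot0_cross0, E).
  assert (HS : dot (vsub S Q) (vsub S Q) <> 0) by (intro E; apply HX, dot0_cross0', E).
  pose proof (norm_pos _ HP) as lPp. pose proof (norm_pos _ HS) as lSp.
  pose proof (norm_sq (vsub P Q)) as EP. pose proof (norm_sq (vsub S Q)) as ES.
  pose proof (lagrange (vsub P Q) (vsub S Q)) as L.
  set (lP := norm (vsub P Q)) in *. set (lS := norm (vsub S Q)) in *.
  set (D := dot (vsub P Q) (vsub S Q)) in *. set (X := cross (vsub P Q) (vsub S Q)) in *.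
  assert (E1 : dot (vsub p Q) (vsub P Q) = x * (lP*lP) + y * D).
  { rewrite EP. unfold D, dot, vsub; simpl. rewrite H1, H2. ring. }
  assert (E2 : dot (vsub p Q) (vsub S Q) = x * D + y * (lS*lS)).
  { rewrite ES. unfold D, dot, vsub; simpl. rewrite H1, H2. ring. }
  rewrite E1, E2.
  assert (Hpos : 0 < lP * lS + D).
  { assert (0 < X * X) by (apply Rsqr_pos_lt in HX; unfold Rsqr in HX; lra).
    assert (D * D < (lP*lS)*(lP*lS)) by nra.
    assert (0 < lP * lS) by nra. nra. }
  replace ((x * (lP * lP) + y * D) / lP + (x * D + y * (lS * lS)) / lS)
    with ((x / lS + y / lP) * (lP * lS + D)) by (field; lra).
  assert (0 <= x / lS) by (unfold Rdiv; apply Rmult_le_pos; [lra | left; apply Rinv_0_lt_compat; lra]).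
  assert (0 <= y / lP) by (unfold Rdiv; apply Rmult_le_pos; [lra | left; apply Rinv_0_lt_compat; lra]).
  split. nra.
  intro Hxy. destruct (Rlt_dec 0 x).
  - assert (0 < x / lS) by (apply Rdiv_lt_0_compat; lra). nra.
  - assert (0 < y / lP) by (apply Rdiv_lt_0_compat; lra). nra.
Qed.

Definition bary (a b c : pt) (al be ga : R) : pt :=
  (al * fst a + be * fst b + ga * fst c, al * snd a + be * snd b + ga * snd c).
Definition coefn (al be ga : R) (k : nat) : R :=
  match Nat.modulo k 3 with 0%nat => al | 1%nat => be | _ => ga end.

Lemma dot_bary a b c al be ga j : (j < 3)%nat ->
  is_triangle a b c -> 0 <= al -> 0 <= be -> 0 <= ga -> al + be + ga = 1 ->
  0 <= dot (vsub (bary a b c al be ga) (vert a b c j)) (bis a b c j) /\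
  (0 < 1 - coefn al be ga j ->
   0 < dot (vsub (bary a b c al be ga) (vert a b c j)) (bis a b c j)).
Proof.
  intros Hj HT H1 H2 H3 Hs. unfold is_triangle in HT.
  destruct a as [a1 a2], b as [b1 b2], c as [c1 c2].
  destruct j as [|[|[|j]]]; try lia; unfold bis; simpl.
  - destruct (corner_dot (c1,c2) (a1,a2) (b1,b2) (bary (a1,a2) (b1,b2) (c1,c2) al be ga) ga be)
      as [A1 A2]; unfold bary; simpl; try lra; try nra.
    + unfold cross, vsub in *; simpl in *; intro E; apply HT; lra.
    + unfold coefn; simpl. split; [exact A1|]. intro; apply A2; lra.
  - destruct (corner_dot (a1,a2) (b1,b2) (c1,c2) (bary (a1,a2) (b1,b2) (c1,c2) al be ga) al ga)
      as [A1 A2]; unfold bary; simpl; try lra; try nra.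
    + unfold cross, vsub in *; simpl in *; intro E; apply HT; lra.
    + unfold coefn; simpl. split; [exact A1|]. intro; apply A2; lra.
  - destruct (corner_dot (b1,b2) (c1,c2) (a1,a2) (bary (a1,a2) (b1,b2) (c1,c2) al be ga) be al)
      as [A1 A2]; unfold bary; simpl; try lra; try nra.
    + unfold cross, vsub in *; simpl in *; intro E; apply HT; lra.
    + unfold coefn; simpl. split; [exact A1|]. intro; apply A2; lra.
Qed.

Lemma cross_bary a b c al be ga j : (j < 3)%nat -> al + be + ga = 1 ->
  cross (vsub (vert a b c (j+1)) (vert a b c j)) (vsub (bary a b c al be ga) (vert a b c j))
  = coefn al be ga (j+2) * cross (vsub b a) (vsub c a).
Proof.
  intros Hj Hs. destruct a as [a1 a2], b as [b1 b2], c as [c1 c2].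
  assert (al = 1 - be - ga) by lra. subst al.
  destruct j as [|[|[|j]]]; try lia; unfold coefn, cross, vsub, bary; simpl; ring.
Qed.

Definition Kc (a b c : pt) := cross (vsub b a) (vsub c a).
Definition perim (a b c : pt) := norm (vsub b a) + norm (vsub c b) + norm (vsub a c).
Definition wg (a b c : pt) (k : nat) :=
  coefn (norm (vsub c b) / perim a b c) (norm (vsub a c) / perim a b c)
        (norm (vsub b a) / perim a b c) k.
Definition pc a b c (i : nat) (t : R) (k : nat) :=
  if Nat.eqb k i then 1 - t + t * wg a b c k else t * wg a b c k.
Definition path a b c i t := bary a b c (pc a b c i t 0) (pc a b c i t 1) (pc a b c i t 2).
Definition incenter a b c := bary a b c (wg a b c 0) (wg a b c 1) (wg a b c 2).

Lemma in_strip_bary a b c w j al be ga : (j < 3)%nat -> al + be + ga = 1 ->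
  in_strip a b c w j (bary a b c al be ga) <->
  Rabs (coefn al be ga (j+2) * Kc a b c / norm (vsub (vert a b c (j+1)) (vert a b c j))) < w/2.
Proof. intros. unfold in_strip. rewrite cross_unitv, cross_bary; auto. reflexivity. Qed.

Lemma bis3 a b c : bis a b c 3 = bis a b c 0.
Proof. reflexivity. Qed.

Lemma on_fold_dot a b c w i p : on_fold a b c w i p ->
  dot (vsub p (vert a b c i)) (bis a b c i) = 0.
Proof.
  intros [l [_ ->]]. destruct (bis a b c i) as [x y].
  destruct (vert a b c i) as [v1 v2].
  unfold dot, vsub, vadd, vscale, unitv, perp; simpl. unfold Rdiv. ring.
Qed.

Lemma sq0 x y : x * x + y * y = 0 -> x = 0 /\ y = 0.
Proof.
  intro E. assert (E1 : x * x = 0) by (pose proof (Rle_0_sqr x); pose proof (Rle_0_sqr y); unfold Rsqr in *; lra).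
  assert (E2 : y * y = 0) by lra.
  apply Rmult_integral in E1; apply Rmult_integral in E2. split; lra.
Qed.

Lemma tri_sides a b c : is_triangle a b c ->
  0 < norm (vsub b a) /\ 0 < norm (vsub c b) /\ 0 < norm (vsub a c).
Proof.
  unfold is_triangle; intro HT.
  destruct a as [a1 a2], b as [b1 b2], c as [c1 c2].
  repeat split; apply norm_pos; unfold dot, vsub, cross in *; simpl in *; intro E;
   apply sq0 in E; destruct E as [E1 E2]; apply HT.
  - replace b1 with a1 by lra; replace b2 with a2 by lra; ring.
  - replace c1 with b1 by lra; replace c2 with b2 by lra; ring.
  - replace c1 with a1 by lra; replace c2 with a2 by lra; ring.
Qed.

Lemma wg_facts a b c : is_triangle a b c ->
  0 < perim a b c /\ 0 < wg a b c 0 < 1 /\ 0 < wg a b c 1 < 1 /\ 0 < wg a b c 2 < 1 /\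
  wg a b c 0 + wg a b c 1 + wg a b c 2 = 1.
Proof.
  intro HT. destruct (tri_sides _ _ _ HT) as [H0 [H1 H2]].
  unfold wg, coefn, perim; simpl.
  set (x := norm (vsub b a)) in *. set (y := norm (vsub c b)) in *. set (z := norm (vsub a c)) in *.
  assert (0 < x + y + z) by lra.
  repeat split; try lra;
  try (apply Rdiv_lt_0_compat; lra);
  try (apply (Rmult_lt_reg_r (x+y+z)); [lra|]; unfold Rdiv; rewrite Rmult_assoc, Rinv_l; lra).
  field. lra.
Qed.

Lemma pc_facts a b c i t : is_triangle a b c -> (i < 3)%nat -> 0 <= t <= 1 ->
  0 <= pc a b c i t 0 /\ 0 <= pc a b c i t 1 /\ 0 <= pc a b c i t 2 /\
  pc a b c i t 0 + pc a b c i t 1 + pc a b c i t 2 = 1.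
Proof.
  intros HT Hi Ht. destruct (wg_facts _ _ _ HT) as [_ [W0 [W1 [W2 WS]]]].
  unfold pc. destruct i as [|[|[|i]]]; try lia; simpl; repeat split; nra.
Qed.

Lemma dot_bary_any a b c al be ga j : (j <= 3)%nat ->
  is_triangle a b c -> 0 <= al -> 0 <= be -> 0 <= ga -> al + be + ga = 1 ->
  0 <= dot (vsub (bary a b c al be ga) (vert a b c j)) (bis a b c j).
Proof.
  intros Hj; intros. destruct (Nat.eq_dec j 3) as [->|].
  - rewrite bis3. change (vert a b c 3) with (vert a b c 0). apply dot_bary; auto.
  - apply dot_bary; auto. lia.
Qed.

Lemma strip_helper t l P K w : 0 < t <= 1 -> 0 < l -> 0 < P -> Rabs K / P < w / 2 ->
  Rabs (t * (l / P) * K / l) < w / 2.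
Proof.
  intros Ht Hl HP HK.
  replace (t * (l / P) * K / l) with (t * (K / P)) by (field; lra).
  unfold Rdiv. rewrite !Rabs_mult, Rabs_inv. rewrite (Rabs_right t) by lra. rewrite (Rabs_right P) by lra.
  fold (Rabs K / P) in *. unfold Rdiv in *.
  assert (0 <= Rabs K * / P). { apply Rmult_le_pos. apply Rabs_pos. left; apply Rinv_0_lt_compat; lra. }
  nra.
Qed.

Lemma path_overlap a b c w i t : is_triangle a b c -> (i < 3)%nat -> 0 < t <= 1 ->
  Rabs (Kc a b c) / perim a b c < w / 2 ->
  overlap a b c w (i, path a b c i t) (prev i, path a b c i t).
Proof.
  intros HT Hi Ht HK.
  destruct (wg_facts _ _ _ HT) as [HP [W0 [W1 [W2 WS]]]].
  destruct (tri_sides _ _ _ HT) as [L0 [L1 L2]].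
  destruct (pc_facts a b c i t HT Hi ltac:(lra)) as [P0 [P1 [P2 PS]]].
  assert (Hstrict : 0 < 1 - coefn (pc a b c i t 0) (pc a b c i t 1) (pc a b c i t 2) i).
  { unfold pc, coefn; destruct i as [|[|[|i]]]; try lia; simpl; nra. }
  assert (Hnf : ~ on_fold a b c w i (path a b c i t)).
  { intro Hf. apply on_fold_dot in Hf.
    destruct (dot_bary a b c _ _ _ i Hi HT P0 P1 P2 PS) as [_ Hd].
    specialize (Hd Hstrict). unfold path in Hf. lra. }
  unfold overlap, is_rpt, piece; simpl fst; simpl snd.
  unfold path in *.
  destruct i as [|[|[|i]]]; try lia; unfold prev, next in *; simpl Nat.modulo in *.
  - repeat split; try lia.
    + apply in_strip_bary; auto. unfold pc, wg, coefn; simpl. apply strip_helper; auto.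
    + apply dot_bary_any; auto.
    + apply dot_bary_any; auto.
    + apply in_strip_bary; auto. unfold pc, wg, coefn; simpl. apply strip_helper; auto.
    + apply dot_bary_any; auto.
    + apply dot_bary_any; auto.
    + intros [_ [H|[[H _]|[H Hf]]]]; try discriminate; simpl in H; try lia. auto.
  - repeat split; try lia.
    + apply in_strip_bary; auto. unfold pc, wg, coefn; simpl. apply strip_helper; auto.
    + apply dot_bary_any; auto.
    + apply dot_bary_any; auto.
    + apply in_strip_bary; auto. unfold pc, wg, coefn; simpl. apply strip_helper; auto.
    + apply dot_bary_any; auto.
    + apply dot_bary_any; auto.
    + intros [_ [H|[[H _]|[H Hf]]]]; try discriminate; simpl in H; try lia. auto.
  - repeat split; try lia.
    + apply in_strip_bary; auto. unfold pc, wg, coefn; simpl. apply strip_helper; auto.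
    + apply dot_bary_any; auto.
    + apply dot_bary_any; auto.
    + apply in_strip_bary; auto. unfold pc, wg, coefn; simpl. apply strip_helper; auto.
    + apply dot_bary_any; auto.
    + apply dot_bary_any; auto.
    + intros [_ [H|[[H _]|[H Hf]]]]; try discriminate; simpl in H; try lia. auto.
Qed.

Lemma loc_const (g : R -> Z) t1 : t1 <= 1 ->
  (forall t0, t1 <= t0 <= 1 -> exists d, 0 < d /\
     forall t, t1 <= t <= 1 -> Rabs (t - t0) < d -> g t = g t0) ->
  g 1 = g t1.
Proof.
  intros H1 Hloc.
  set (E := fun x => t1 <= x <= 1 /\ forall s, t1 <= s <= x -> g s = g t1).
  assert (HB : bound E) by (exists 1; intros x [Hx _]; lra).
  assert (HE : exists x, E x) by (exists t1; split; [lra | intros s Hs; replace s with t1 by lra; auto]).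
  destruct (completeness E HB HE) as [m [Hub Hlub]].
  assert (Hm1 : t1 <= m) by (apply Hub; unfold E; split; [lra | intros s Hs; replace s with t1 by lra; auto]).
  assert (Hm2 : m <= 1) by (apply Hlub; intros x [Hx _]; lra).
  assert (Hbelow : forall s, t1 <= s < m -> g s = g t1).
  { intros s Hs. destruct (classic (exists x, E x /\ s < x)) as [[x [[Hx Hx'] Hsx]]|Hn].
    - apply Hx'. lra.
    - exfalso. assert (m <= s). { apply Hlub. intros x Ex. destruct (Rle_dec x s); auto.
        exfalso; apply Hn; exists x; split; auto; lra. } lra. }
  destruct (Hloc m ltac:(lra)) as [d [Hd Hdm]].
  assert (Hgm : g m = g t1).
  { destruct (Req_dec m t1) as [->|Hne]; auto.
    set (s := Rmax t1 (m - d/2)).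
    assert (t1 <= s) by apply Rmax_l. assert (m - d/2 <= s) by apply Rmax_r.
    assert (s < m) by (unfold s; apply Rmax_lub_lt; lra).
    rewrite <- (Hdm s); [apply Hbelow; lra | lra |].
    rewrite Rabs_left1; lra. }
  assert (Hm : m = 1).
  { destruct (Req_dec m 1) as [|Hne]; auto.
    set (x := Rmin 1 (m + d/2)).
    assert (x <= 1) by apply Rmin_l. assert (x <= m + d/2) by apply Rmin_r.
    assert (m < x) by (unfold x; apply Rmin_glb_lt; lra).
    assert (E x).
    { split; [lra|]. intros s Hs. destruct (Rlt_dec s m); [apply Hbelow; lra|].
      rewrite (Hdm s); auto; [lra|]. rewrite Rabs_right; lra. }
    assert (x <= m) by (apply Hub; auto). lra. }
  subst m. auto.
Qed.

Lemma path_eq a b c i t : is_triangle a b c -> (i < 3)%nat ->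
  path a b c i t = vadd (vert a b c i) (vscale t (vsub (incenter a b c) (vert a b c i))).
Proof.
  intros HT Hi. destruct (wg_facts _ _ _ HT) as [_ [_ [_ [_ WS]]]].
  unfold path, incenter, bary, pc, vadd, vscale, vsub.
  assert (E0 : wg a b c 0 = 1 - wg a b c 1 - wg a b c 2) by lra.
  destruct i as [|[|[|i]]]; try lia; unfold vert; simpl; rewrite E0; f_equal; ring.
Qed.

Lemma path_one a b c i : is_triangle a b c -> (i < 3)%nat -> path a b c i 1 = incenter a b c.
Proof.
  intros HT Hi. rewrite path_eq by auto. destruct (incenter a b c), (vert a b c i).
  unfold vadd, vscale, vsub; simpl; f_equal; ring.
Qed.

Lemma norm_vscale s v : norm (vscale s v) = Rabs s * norm v.
Proof.
  destruct v as [x y]. unfold norm, vscale, dot; simpl.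
  replace (s * x * (s * x) + s * y * (s * y)) with ((s*s) * (x * x + y * y)) by ring.
  rewrite sqrt_mult_alt by nra. f_equal. apply sqrt_Rsqr_abs.
Qed.

Lemma dist_path a b c i t0 t : is_triangle a b c -> (i < 3)%nat ->
  Defs.dist (path a b c i t0) (path a b c i t) = Rabs (t0 - t) * norm (vsub (incenter a b c) (vert a b c i)).
Proof.
  intros HT Hi. unfold Defs.dist. rewrite !path_eq by auto. rewrite <- norm_vscale.
  f_equal. destruct (incenter a b c), (vert a b c i). unfold vadd, vscale, vsub; simpl; f_equal; ring.
Qed.

Lemma dist_path_vert a b c i t : is_triangle a b c -> (i < 3)%nat ->
  Defs.dist (path a b c i t) (vert a b c i) = Rabs t * norm (vsub (incenter a b c) (vert a b c i)).
Proof.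
  intros HT Hi. unfold Defs.dist. rewrite !path_eq by auto. rewrite <- norm_vscale.
  f_equal. destruct (incenter a b c), (vert a b c i). unfold vadd, vscale, vsub; simpl; f_equal; ring.
Qed.

Lemma cos_ratio_gt u u' : cross u u' <> 0 -> -1 < dot u u' / (norm u * norm u').
Proof.
  intro HX.
  assert (HP : dot u u <> 0) by (intro E; apply HX, dot0_cross0, E).
  assert (HS : dot u' u' <> 0) by (intro E; apply HX, dot0_cross0', E).
  pose proof (norm_pos _ HP). pose proof (norm_pos _ HS).
  pose proof (norm_sq u). pose proof (norm_sq u'). pose proof (lagrange u u').
  assert (0 < cross u u' * cross u u') by (apply Rsqr_pos_lt in HX; unfold Rsqr in HX; lra).
  assert (0 < norm u * norm u') by nra.
  assert (dot u u' * dot u u' < (norm u * norm u') * (norm u * norm u')) by nra.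
  assert (- (norm u * norm u') < dot u u') by nra.
  apply (Rmult_lt_reg_r (norm u * norm u')); auto.
  unfold Rdiv. rewrite Rmult_assoc, Rinv_l by lra. lra.
Qed.

Lemma acos_lt_PI x : -1 < x -> acos x < PI.
Proof.
  intro H. destruct (Rlt_dec x 1). apply acos_bound_lt; lra.
  unfold acos. destruct (Rle_dec x (-1)); [lra|]. destruct (Rle_dec 1 x); [apply PI_RGT_0| lra].
Qed.

Lemma fold_pos a b c w i : is_triangle a b c -> (i < 3)%nat -> 0 < w ->
  0 < w / (2 * cos (fold_angle a b c i / 2)).
Proof.
  intros HT Hi Hw. unfold fold_angle.
  assert (HX : cross (vsub (vert a b c (prev i)) (vert a b c i)) (vsub (vert a b c (i + 1)) (vert a b c i)) <> 0).
  { unfold is_triangle in HT. destruct a as [a1 a2], b as [b1 b2], c as [c1 c2].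
    destruct i as [|[|[|i]]]; try lia; unfold cross, vsub in *; simpl in *; intro E; apply HT; lra. }
  pose proof (cos_ratio_gt _ _ HX) as Hr. apply acos_lt_PI in Hr.
  match goal with |- context [acos ?x] => pose proof (acos_bound x) end.
  assert (0 < cos (acos (dot (vsub (vert a b c (prev i)) (vert a b c i)) (vsub (vert a b c (i + 1)) (vert a b c i)) /
      (norm (vsub (vert a b c (prev i)) (vert a b c i)) * norm (vsub (vert a b c (i + 1)) (vert a b c i)))) / 2)).
  { apply cos_gt_0; lra. }
  apply Rdiv_lt_0_compat; lra.
Qed.

Lemma vert_on_fold a b c w i : is_triangle a b c -> (i < 3)%nat -> 0 < w ->
  on_fold a b c w i (vert a b c i).
Proof.
  intros HT Hi Hw. exists 0. split. rewrite Rabs_R0. apply fold_pos; auto.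
  destruct (vert a b c i), (unitv (perp (bis a b c i))). unfold vadd, vscale; simpl; f_equal; ring.
Qed.

Lemma corner_eps a b c w F eps i : is_triangle a b c -> 0 < w ->
  crossing_info a b c w eps -> agrees a b c w F eps -> (i < 3)%nat ->
  Rabs (Kc a b c) / perim a b c < w / 2 ->
  eps (i, incenter a b c) (prev i, incenter a b c) = (if F i then 1%Z else (-1)%Z).
Proof.
  intros HT Hw [_ [_ [_ [_ Hcont]]]] AG Hi HK.
  destruct (AG i Hi) as [del [Hdel Hag]].
  set (M := norm (vsub (incenter a b c) (vert a b c i))).
  assert (HM : 0 <= M) by apply norm_ge0.
  set (t1 := Rmin 1 (del / (2 * (M + 1)))).
  assert (Ht1p : 0 < t1).
  { unfold t1. apply Rmin_glb_lt; [lra|]. apply Rdiv_lt_0_compat; lra. }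
  assert (Ht11 : t1 <= 1) by apply Rmin_l.
  assert (Ht12 : t1 <= del / (2 * (M + 1))) by apply Rmin_r.
  set (g := fun t => eps (i, path a b c i t) (prev i, path a b c i t)).
  assert (Hg1 : g t1 = (if F i then 1%Z else (-1)%Z)).
  { destruct (path_overlap a b c w i t1 HT Hi ltac:(lra) HK) as [X1 [X2 [_ X4]]].
    apply Hag; auto. exists (vert a b c i). split. apply vert_on_fold; auto.
    rewrite dist_path_vert by auto. fold M. rewrite Rabs_right by lra.
    assert (t1 * M <= del / (2 * (M+1)) * M) by nra.
    assert (del / (2 * (M+1)) * M < del).
    { unfold Rdiv. rewrite Rmult_assoc. 
      assert (/ (2 * (M + 1)) * M < 1).
      { apply (Rmult_lt_reg_l (2 * (M+1))); [lra|]. rewrite <- Rmult_assoc, Rinv_r; lra. }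
      assert (0 <= / (2 * (M + 1)) * M).
      { apply Rmult_le_pos; auto. left; apply Rinv_0_lt_compat; lra. }
      nra. }
    lra. }
  assert (Hc : g 1 = g t1).
  { apply loc_const; auto. intros t0 Ht0.
    destruct (Hcont _ _ (path_overlap a b c w i t0 HT Hi ltac:(lra) HK)) as [d' [Hd' Hd'c]].
    exists (d' / (M + 1)). split; [apply Rdiv_lt_0_compat; lra|].
    intros t Ht Htt. unfold g. apply Hd'c.
    - apply path_overlap; auto; lra.
    - assert (Hdist : Defs.dist (path a b c i t0) (path a b c i t) < d').
      { rewrite dist_path by auto. fold M. rewrite Rabs_minus_sym.
        assert (Rabs (t - t0) * (M + 1) < d').
        { apply (Rmult_lt_compat_r (M+1)) in Htt; [|lra].
          unfold Rdiv in Htt. rewrite Rmult_assoc, Rinv_l in Htt by lra. lra. }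
        pose proof (Rabs_pos (t - t0)). nra. }
      split; [exact Hdist|]. split; [reflexivity|]. left; reflexivity.
    - assert (Hdist : Defs.dist (path a b c i t0) (path a b c i t) < d').
      { rewrite dist_path by auto. fold M. rewrite Rabs_minus_sym.
        assert (Rabs (t - t0) * (M + 1) < d').
        { apply (Rmult_lt_compat_r (M+1)) in Htt; [|lra].
          unfold Rdiv in Htt. rewrite Rmult_assoc, Rinv_l in Htt by lra. lra. }
        pose proof (Rabs_pos (t - t0)). nra. }
      split; [exact Hdist|]. split; [reflexivity|]. left; reflexivity. }
  unfold g in Hc. rewrite path_one in Hc by auto. rewrite Hc. exact Hg1.
Qed.

Lemma overlap_sym a b c w x y : overlap a b c w x y -> overlap a b c w y x.
Proof.
  intros [H1 [H2 [H3 H4]]]. split; auto. split; auto. split; auto.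
  intros [E1 E2]. apply H4. split; auto.
  destruct E2 as [E|[[E F]|[E F]]]; auto.
  - right; right. split; auto. rewrite <- E1. exact F.
  - right; left. split; auto. rewrite <- E1. exact F.
Qed.

Lemma I_overlap a b c w i : is_triangle a b c -> (i < 3)%nat ->
  Rabs (Kc a b c) / perim a b c < w / 2 ->
  overlap a b c w (i, incenter a b c) (prev i, incenter a b c).
Proof.
  intros. rewrite <- (path_one a b c i) by auto. apply path_overlap; auto; lra.
Qed.

Lemma no_big_w a b c w F : same_type F -> allowed a b c w F ->
  ~ (Rabs (Kc a b c) / perim a b c < w / 2).
Proof.
  intros [F01 F12] [HT [Hw [_ [eps [CI AG]]]]] HK.
  pose proof (corner_eps a b c w F eps 0 HT Hw CI AG ltac:(lia) HK) as C0.
  pose proof (corner_eps a b c w F eps 1 HT Hw CI AG ltac:(lia) HK) as C1.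
  pose proof (corner_eps a b c w F eps 2 HT Hw CI AG ltac:(lia) HK) as C2.
  pose proof (I_overlap a b c w 0 HT ltac:(lia) HK) as O0.
  pose proof (I_overlap a b c w 1 HT ltac:(lia) HK) as O1.
  pose proof (I_overlap a b c w 2 HT ltac:(lia) HK) as O2.
  unfold prev in *; simpl Nat.modulo in *.
  destruct CI as [_ [_ [Hanti [Htr _]]]].
  rewrite <- F12, <- F01 in C2. rewrite <- F01 in C1.
  destruct (F 0%nat).
  - assert (E : eps (2%nat, incenter a b c) (0%nat, incenter a b c) = 1%Z).
    { apply (Htr _ (1%nat, incenter a b c)); auto. apply overlap_sym; auto. }
    rewrite (Hanti _ _ O0), C0 in E. discriminate.
  - assert (E : eps (0%nat, incenter a b c) (2%nat, incenter a b c) = 1%Z).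
    { apply (Htr _ (1%nat, incenter a b c)); auto.
      - apply overlap_sym; auto.
      - apply overlap_sym; auto.
      - rewrite (Hanti _ _ O1), C1. reflexivity.
      - rewrite (Hanti _ _ O2), C2. reflexivity. }
    rewrite C0 in E. discriminate.
Qed.

Lemma amgm3 p q r : 0 <= p -> 0 <= q -> 0 <= r -> 27 * (p * q * r) <= (p + q + r) ^ 3.
Proof.
  intros.
  assert (0 <= (p + q + r) * ((p - q) * (p - q) + (q - r) * (q - r) + (r - p) * (r - p))).
  { apply Rmult_le_pos; [lra|]. pose proof (Rle_0_sqr (p-q)); pose proof (Rle_0_sqr (q-r)); pose proof (Rle_0_sqr (r-p)); unfold Rsqr in *; lra. }
  assert (0 <= p * ((q - r) * (q - r))) by (apply Rmult_le_pos; [lra| apply Rle_0_sqr]).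
  assert (0 <= q * ((r - p) * (r - p))) by (apply Rmult_le_pos; [lra| apply Rle_0_sqr]).
  assert (0 <= r * ((p - q) * (p - q))) by (apply Rmult_le_pos; [lra| apply Rle_0_sqr]).
  assert (E : (p + q + r) ^ 3 - 27 * (p * q * r) =
    (p + q + r) * ((p - q) * (p - q) + (q - r) * (q - r) + (r - p) * (r - p)) / 2 +
    3 * (p * ((q - r) * (q - r)) + q * ((r - p) * (r - p)) + r * ((p - q) * (p - q)))) by field.
  lra.
Qed.

Lemma iso a b c : is_triangle a b c ->
  6 * sqrt 3 * Rabs (Kc a b c) <= perim a b c * perim a b c.
Proof.
  intro HT. destruct (tri_sides _ _ _ HT) as [L0 [L1 L2]].
  unfold perim.
  set (x := norm (vsub b a)) in *. set (y := norm (vsub c b)) in *. set (z := norm (vsub a c)) in *.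
  set (K := Kc a b c).
  assert (Hh : 4 * (K * K) = (x+y+z)*((-x+y+z)*(x-y+z)*(x+y-z))).
  { transitivity (2*((x*x)*(y*y) + (y*y)*(z*z) + (z*z)*(x*x)) - (x*x)*(x*x) - (y*y)*(y*y) - (z*z)*(z*z)); [| ring].
    unfold x, y, z; rewrite !norm_sq. unfold K. destruct a, b, c; unfold Kc, cross, dot, vsub; simpl; ring. }
  set (p := -x+y+z) in *. set (q := x-y+z) in *. set (r := x+y-z) in *.
  assert (HP : x + y + z = p + q + r) by (unfold p, q, r; ring).
  assert (Hpqr : 0 <= p * q * r).
  { assert (0 <= 4 * (K*K)) by nra.
    destruct (Rle_dec 0 (p*q*r)); auto. exfalso.
    assert ((x+y+z) * (p*q*r) < 0) by (apply Rmult_pos_neg; lra). lra. }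
  assert (Hp : 0 <= p).
  { destruct (Rle_dec 0 p); auto. exfalso. assert (0 < q) by (unfold p, q in *; lra).
    assert (0 < r) by (unfold p, r in *; lra).
    assert (p * q < 0) by (apply Rmult_neg_pos; lra). assert (p * q * r < 0) by (apply Rmult_neg_pos; lra). lra. }
  assert (Hq : 0 <= q).
  { destruct (Rle_dec 0 q); auto. exfalso. assert (0 < p) by (unfold p, q in *; lra).
    assert (0 < r) by (unfold q, r in *; lra).
    assert (p * q < 0) by (apply Rmult_pos_neg; lra). assert (p * q * r < 0) by (apply Rmult_neg_pos; lra). lra. }
  assert (Hr : 0 <= r).
  { destruct (Rle_dec 0 r); auto. exfalso. assert (0 < p) by (unfold p, r in *; lra).
    assert (0 < q) by (unfold q, r in *; lra).
    assert (0 < p * q) by (apply Rmult_lt_0_compat; lra). assert (p * q * r < 0) by (apply Rmult_pos_neg; lra). lra. }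
  pose proof (amgm3 p q r Hp Hq Hr) as AM.
  set (P := x + y + z) in *.
  assert (H108 : 108 * (K * K) <= (P*P) * (P*P)).
  { rewrite HP in Hh |- *. replace ((p+q+r)*(p+q+r)*((p+q+r)*(p+q+r))) with ((p+q+r)*(p+q+r)^3) by ring.
    assert (0 <= p + q + r) by lra. nra. }
  set (s := sqrt 3). assert (Hs : s * s = 3) by (apply sqrt_sqrt; lra).
  assert (Hs0 : 0 <= s) by apply sqrt_pos.
  assert (HK2 : Rabs K * Rabs K = K * K) by (rewrite <- Rabs_mult; apply Rabs_right; nra).
  pose proof (Rabs_pos K).
  assert (Hsq : (6 * s * Rabs K) * (6 * s * Rabs K) <= (P*P)*(P*P)).
  { replace ((6 * s * Rabs K) * (6 * s * Rabs K)) with (36 * (s*s) * (Rabs K * Rabs K)) by ring.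
    rewrite Hs, HK2. lra. }
  destruct (Rle_dec (6 * s * Rabs K) (P * P)); auto. exfalso.
  assert (0 <= P * P) by nra. assert (0 <= 6 * s * Rabs K) by nra. nra.
Qed.

Lemma part1 a b c w F : same_type F -> allowed a b c w F -> 3 * sqrt 3 <= ribbonlength a b c w.
Proof.
  intros HF HA. pose proof (no_big_w _ _ _ _ _ HF HA) as Hw.
  destruct HA as [HT [Hw0 _]]. pose proof (iso _ _ _ HT) as Hi.
  destruct (wg_facts _ _ _ HT) as [HP _].
  unfold ribbonlength, Defs.dist.
  replace (norm (vsub a b) + norm (vsub b c) + norm (vsub c a)) with (perim a b c)
    by (unfold perim; rewrite (norm_vsub_sym a b), (norm_vsub_sym b c), (norm_vsub_sym c a); ring).
  set (P := perim a b c) in *. set (K := Rabs (Kc a b c)) in *.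
  assert (HK : w / 2 <= K / P) by lra.
  assert (Hw2 : w * P <= 2 * K).
  { apply (Rmult_le_compat_r P) in HK; [|lra].
    assert (K / P * P = K) by (field; lra). lra. }
  pose proof (sqrt_pos 3).
  apply (Rmult_le_reg_r w); auto. replace (P / w * w) with P by (field; lra).
  apply (Rmult_le_reg_r P); auto. nra.
Qed.

Lemma cross_unitv_r q v : cross q (unitv v) = cross q v / norm v.
Proof. destruct v, q; unfold cross, unitv; simpl; unfold Rdiv; ring. Qed.

Lemma Rabs_div_pos x s : 0 < s -> Rabs (x / s) = Rabs x / s.
Proof. intro. unfold Rdiv. rewrite Rabs_mult, Rabs_inv, (Rabs_right s) by lra. reflexivity. Qed.

Lemma fold_not_strip P Q S l w s :
  norm (vsub P Q) = s -> norm (vsub S Q) = s -> norm (vsub P S) = s -> 0 < s ->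
  w / 2 <= Rabs (cross (vsub P S) (vsub Q S)) / s ->
  ~ Rabs (cross (unitv (vsub P S))
       (vsub (vadd Q (vscale l (unitv (perp (vadd (unitv (vsub P Q)) (unitv (vsub S Q))))))) S)) < w / 2.
Proof.
  intros N1 N2 N3 Hs Hw.
  rewrite cross_unitv, N3.
  assert (E1 : cross (vsub P S) (vsub (vadd Q (vscale l (unitv (perp (vadd (unitv (vsub P Q)) (unitv (vsub S Q))))))) S)
    = cross (vsub P S) (vsub Q S) + l * cross (vsub P S) (unitv (perp (vadd (unitv (vsub P Q)) (unitv (vsub S Q)))))).
  { destruct (unitv (perp (vadd (unitv (vsub P Q)) (unitv (vsub S Q))))). destruct P, Q, S.
    unfold cross, vsub, vadd, vscale; simpl; ring. }
  assert (E2 : cross (vsub P S) (unitv (perp (vadd (unitv (vsub P Q)) (unitv (vsub S Q))))) = 0).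
  { rewrite cross_unitv_r.
    assert (E3 : cross (vsub P S) (perp (vadd (unitv (vsub P Q)) (unitv (vsub S Q))))
            = dot (vsub P S) (vadd (unitv (vsub P Q)) (unitv (vsub S Q)))).
    { destruct (vadd (unitv (vsub P Q)) (unitv (vsub S Q))), (vsub P S). unfold cross, dot, perp; simpl; ring. }
    rewrite E3, dot_vadd_unitv, N1, N2.
    pose proof (norm_sq (vsub P Q)) as M1. pose proof (norm_sq (vsub S Q)) as M2.
    rewrite N1 in M1. rewrite N2 in M2.
    assert (E4 : dot (vsub P S) (vsub P Q) + dot (vsub P S) (vsub S Q) = dot (vsub P Q) (vsub P Q) - dot (vsub S Q) (vsub S Q)).
    { destruct P, Q, S. unfold dot, vsub; simpl; ring. }
    replace (dot (vsub P S) (vsub P Q) / s + dot (vsub P S) (vsub S Q) / s)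
      with ((dot (vsub P S) (vsub P Q) + dot (vsub P S) (vsub S Q)) / s) by (field; lra).
    rewrite E4, <- M1, <- M2. unfold Rdiv. ring. }
  rewrite E1, E2, Rmult_0_r, Rplus_0_r. rewrite Rabs_div_pos by lra. intro; lra.
Qed.

Lemma equi_K a b c s t : s * s = dot (vsub b a) (vsub b a) -> s * s = dot (vsub c a) (vsub c a) ->
  s * s = dot (vsub c b) (vsub c b) -> 0 <= s -> t * t = 3 -> 0 <= t ->
  Rabs (Kc a b c) = t * (s * s) / 2.
Proof.
  intros H1 H2 H3 Hs Ht Ht0.
  assert (Hd : dot (vsub b a) (vsub c a) = s * s / 2).
  { assert (dot (vsub c b) (vsub c b) = dot (vsub c a) (vsub c a) - 2 * dot (vsub b a) (vsub c a) + dot (vsub b a) (vsub b a))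
      by (destruct a, b, c; unfold dot, vsub; simpl; ring). lra. }
  pose proof (lagrange (vsub b a) (vsub c a)) as L. rewrite Hd, <- H1, <- H2 in L.
  fold (Kc a b c) in L. set (K := Kc a b c) in *.
  assert (HK : Rabs K * Rabs K = (t * (s * s) / 2) * (t * (s * s) / 2)).
  { rewrite <- Rabs_mult, Rabs_right by nra. replace ((t * (s * s) / 2) * (t * (s * s) / 2)) with ((t*t) * (s*s*(s*s)) / 4) by field.
    rewrite Ht. lra. }
  pose proof (Rabs_pos K). assert (0 <= t * (s * s) / 2) by (apply Rmult_le_pos; [nra|lra]) || idtac.
  assert (0 <= t * (s * s) / 2). { unfold Rdiv. apply Rmult_le_pos; [|lra]. apply Rmult_le_pos; nra. }
  nra.
Qed.

Lemma immersed_gen A B C p w s t :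
  norm (vsub C A) = s -> norm (vsub B A) = s -> norm (vsub A B) = s -> norm (vsub C B) = s ->
  0 < s -> t * t = 3 -> 0 < t -> w = s * t / 3 ->
  Rabs (cross (vsub B A) (vsub C A)) = t * (s * s) / 2 ->
  Rabs (cross (unitv (vsub B A)) (vsub p A)) < w / 2 ->
  ~ (dot (vsub p A) (vadd (unitv (vsub C A)) (unitv (vsub B A))) < 0 /\
     dot (vsub p B) (vadd (unitv (vsub A B)) (unitv (vsub C B))) < 0).
Proof.
  intros N1 N2 N3 N4 Hs Ht Ht0 Hw HK HX [Hd1 Hd2].
  rewrite !dot_vadd_unitv, N1, N2, N3, N4 in *.
  rewrite cross_unitv, N2, Rabs_div_pos in HX by lra.
  pose proof (norm_sq (vsub B A)) as M1. pose proof (norm_sq (vsub C A)) as M2.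
  pose proof (norm_sq (vsub C B)) as M3. rewrite N2 in M1. rewrite N1 in M2. rewrite N4 in M3.
  assert (I1 : dot (vsub p A) (vsub C A) + dot (vsub p A) (vsub B A) + (dot (vsub p B) (vsub A B) + dot (vsub p B) (vsub C B))
     = 2 * dot (vsub p A) (vsub C A) - dot (vsub p A) (vsub B A) - dot (vsub B A) (vsub C A) + 2 * dot (vsub B A) (vsub B A))
    by (destruct A, B, C, p; unfold dot, vsub; simpl; ring).
  assert (I2 : (2 * dot (vsub p A) (vsub C A) - dot (vsub p A) (vsub B A)) * dot (vsub B A) (vsub B A)
     = dot (vsub p A) (vsub B A) * (2 * dot (vsub B A) (vsub C A) - dot (vsub B A) (vsub B A))
       + cross (vsub B A) (vsub p A) * (2 * cross (vsub B A) (vsub C A)))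
    by (destruct A, B, C, p; unfold dot, vsub, cross; simpl; ring).
  assert (I3 : dot (vsub C B) (vsub C B) = dot (vsub C A) (vsub C A) - 2 * dot (vsub B A) (vsub C A) + dot (vsub B A) (vsub B A))
    by (destruct A, B, C; unfold dot, vsub; simpl; ring).
  set (X := cross (vsub B A) (vsub p A)) in *. set (K := cross (vsub B A) (vsub C A)) in *.
  set (d1 := dot (vsub p A) (vsub C A)) in *. set (d2 := dot (vsub p A) (vsub B A)) in *.
  set (d3 := dot (vsub p B) (vsub A B)) in *. set (d4 := dot (vsub p B) (vsub C B)) in *.
  set (def := dot (vsub B A) (vsub C A)) in *.
  rewrite <- M1, <- M2, <- M3 in *.
  assert (Hdef : def = s * s / 2) by lra.
  rewrite Hdef in I2, I1.
  assert (Hsum : d1 + d2 + (d3 + d4) < 0).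
  { assert (d1 / s + d2 / s < 0) by lra. assert (d3 / s + d4 / s < 0) by lra.
    assert (E1 : d1 / s + d2 / s = (d1 + d2) / s) by (field; lra).
    assert (E2 : d3 / s + d4 / s = (d3 + d4) / s) by (field; lra).
    rewrite E1 in *. rewrite E2 in *.
    assert (d1 + d2 < 0). { destruct (Rlt_dec (d1 + d2) 0); auto. exfalso.
      assert (0 <= (d1 + d2) / s) by (apply Rdiv_le_0_compat; lra) || (unfold Rdiv; apply Rmult_le_pos; [lra | left; apply Rinv_0_lt_compat; lra]). lra. }
    assert (d3 + d4 < 0). { destruct (Rlt_dec (d3 + d4) 0); auto. exfalso.
      assert (0 <= (d3 + d4) / s) by (unfold Rdiv; apply Rmult_le_pos; [lra | left; apply Rinv_0_lt_compat; lra]). lra. }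
    lra. }
  assert (HXs : Rabs X < s * s * t / 6).
  { assert (Rabs X / s * s < w / 2 * s) by (apply Rmult_lt_compat_r; lra).
    replace (Rabs X / s * s) with (Rabs X) in * by (field; lra). rewrite Hw in *. nra. }
  assert (HXK : Rabs (X * K) < s * s * s * s / 4).
  { rewrite Rabs_mult, HK. pose proof (Rabs_pos X).
    assert (Rabs X * (t * (s * s) / 2) < s * s * t / 6 * (t * (s * s) / 2)).
    { apply Rmult_lt_compat_r; auto. unfold Rdiv. apply Rmult_lt_0_compat; [|lra]. apply Rmult_lt_0_compat; nra. }
    replace (s * s * t / 6 * (t * (s * s) / 2)) with ((t*t) * (s*s*s*s) / 12) in H0 by field.
    rewrite Ht in H0. lra. }
  pose proof (Rle_abs (- (X * K))). rewrite Rabs_Ropp in H.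
  assert (0 < s * s) by nra.
  assert ((d1 + d2 + (d3 + d4)) * (s * s) = 2 * (X * K) + 3 / 2 * (s * s * (s * s))).
  { rewrite I1. replace ((2 * d1 - d2 - s * s / 2 + 2 * (s * s)) * (s * s)) with ((2 * d1 - d2) * (s * s) + 3/2 * (s * s * (s * s))) by field.
    rewrite I2. field. }
  nra.
Qed.

Definition epsF (F : nat -> bool) (x y : rpt) : Z :=
  let sg := (if F 0%nat then 1%Z else (-1)%Z) in
  if Nat.eqb (fst y) (prev (fst x)) then sg
  else if Nat.eqb (fst x) (prev (fst y)) then (- sg)%Z else 0%Z.

Lemma overlap_idx a b c w x y : overlap a b c w x y ->
  (fst x < 3)%nat /\ (fst y < 3)%nat /\ fst x <> fst y.
Proof.
  intros [[H1 _] [[H2 _] [H3 H4]]]. repeat split; auto.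
  intro E. apply H4. split; auto.
Qed.

Lemma key_glue a b c w x y k :
  (forall k p, (k < 3)%nat -> on_fold a b c w k p -> ~ in_strip a b c w (next k) p) ->
  overlap a b c w x y -> (k < 3)%nat -> on_fold a b c w k (snd x) ->
  (fst x = k \/ fst x = prev k) -> False.
Proof.
  intros G3 HO Hk Hf Hx.
  pose proof (overlap_idx _ _ _ _ _ _ HO) as [Ix [Iy Ixy]].
  destruct HO as [_ [[_ [Hs _]] [Hsnd Hns]]].
  destruct x as [i p], y as [j q]; simpl in *. subst q.
  apply (G3 k p Hk Hf).
  destruct k as [|[|[|k]]]; try lia; unfold prev, next in *; simpl in *;
  destruct i as [|[|[|i]]]; try lia; destruct j as [|[|[|j]]]; try lia; auto;
  exfalso; apply Hns; split; auto; simpl; unfold next; simpl; auto.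
Qed.

Lemma glue_fst a b c w x y z :
  (forall k p, (k < 3)%nat -> on_fold a b c w k p -> ~ in_strip a b c w (next k) p) ->
  overlap a b c w x y -> same_rpt a b c w x z -> fst z = fst x.
Proof.
  intros G3 HO [Hsnd [E|[[E Hf]|[E Hf]]]]; auto.
  - pose proof (overlap_idx _ _ _ _ _ _ HO) as [Ix _].
    exfalso. apply (key_glue a b c w x y (fst z) G3 HO); auto.
    + rewrite E. unfold next. apply Nat.mod_upper_bound. lia.
    + right. rewrite E. destruct (fst x) as [|[|[|i]]]; try lia; reflexivity.
  - pose proof (overlap_idx _ _ _ _ _ _ HO) as [Ix _].
    exfalso. apply (key_glue a b c w x y (fst x) G3 HO); auto.
Qed.

Lemma epsF_fst F x y x' y' : fst x' = fst x -> fst y' = fst y -> epsF F x' y' = epsF F x y.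
Proof. intros E1 E2. unfold epsF. rewrite E1, E2. reflexivity. Qed.

Lemma combi a b c w F : is_triangle a b c -> 0 < w -> immersed a b c w ->
  (forall p, in_strip a b c w 0 p -> in_strip a b c w 1 p -> in_strip a b c w 2 p -> False) ->
  (forall k p, (k < 3)%nat -> on_fold a b c w k p -> ~ in_strip a b c w (next k) p) ->
  same_type F -> allowed a b c w F.
Proof.
  intros HT Hw HI NT G3 [F01 F12].
  split; auto. split; auto. split; auto. exists (epsF F). split.
  - split; [|split; [|split; [|split]]].
    + intros x y HO. pose proof (overlap_idx _ _ _ _ _ _ HO) as [Ix [Iy Ixy]].
      destruct x as [i p], y as [j q]; simpl in *; unfold epsF; simpl.
      destruct (F 0%nat);
      destruct i as [|[|[|i]]]; try lia; destruct j as [|[|[|j]]]; try lia; simpl; auto.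
    + intros x x' y y' HO Hx' Hy' Sx Sy. apply epsF_fst.
      * eapply glue_fst; eauto.
      * eapply glue_fst; eauto. apply overlap_sym; eauto.
    + intros x y HO. pose proof (overlap_idx _ _ _ _ _ _ HO) as [Ix [Iy Ixy]].
      destruct x as [i p], y as [j q]; simpl in *; unfold epsF; simpl.
      destruct (F 0%nat);
      destruct i as [|[|[|i]]]; try lia; destruct j as [|[|[|j]]]; try lia; simpl; auto.
    + intros x y z Hxy Hyz Hxz _ _. exfalso.
      pose proof (overlap_idx _ _ _ _ _ _ Hxy) as [Ix [Iy Ixy]].
      pose proof (overlap_idx _ _ _ _ _ _ Hyz) as [_ [Iz Iyz]].
      pose proof (overlap_idx _ _ _ _ _ _ Hxz) as [_ [_ Ixz]].
      destruct Hxy as [[_ [Sx _]] [[_ [Sy _]] [E1 _]]].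
      destruct Hyz as [_ [[_ [Sz _]] [E2 _]]].
      destruct x as [i p], y as [j q], z as [k r]; simpl in *. subst q r.
      destruct i as [|[|[|i]]]; try lia; destruct j as [|[|[|j]]]; try lia;
      destruct k as [|[|[|k]]]; try lia; eapply NT; eauto.
    + intros x y HO. exists 1. split; [lra|].
      intros x' y' HO' [_ Rx] [_ Ry]. apply epsF_fst.
      * pose proof (glue_fst _ _ _ _ _ _ _ G3 HO Rx). auto.
      * pose proof (glue_fst _ _ _ _ _ _ _ G3 (overlap_sym _ _ _ _ _ _ HO) Ry). auto.
  - intros i Hi. exists 1. split; [lra|]. intros p _ _ _ _.
    unfold epsF; simpl. rewrite Nat.eqb_refl.
    destruct i as [|[|[|i]]]; try lia; auto.
    + rewrite F01. auto.
    + rewrite F01, F12. auto.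
Qed.

Lemma cyc1 a b c : cross (vsub c b) (vsub a b) = Kc a b c.
Proof. destruct a, b, c; unfold Kc, cross, vsub; simpl; ring. Qed.
Lemma cyc2 a b c : cross (vsub a c) (vsub b c) = Kc a b c.
Proof. destruct a, b, c; unfold Kc, cross, vsub; simpl; ring. Qed.

Lemma part2 a b c F : is_triangle a b c -> equilateral a b c -> same_type F ->
  exists w : R, allowed a b c w F /\ ribbonlength a b c w = 3 * sqrt 3.
Proof.
  intros HT [Q1 Q2] HF. unfold Defs.dist in Q1, Q2.
  destruct (tri_sides _ _ _ HT) as [Hs _].
  set (s := norm (vsub b a)) in *.
  assert (Nab : norm (vsub a b) = s) by (unfold s; apply norm_vsub_sym).
  assert (Nbc : norm (vsub b c) = s) by lra.
  assert (Ncb : norm (vsub c b) = s) by (rewrite norm_vsub_sym; lra).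
  assert (Nca : norm (vsub c a) = s) by lra.
  assert (Nac : norm (vsub a c) = s) by (rewrite norm_vsub_sym; lra).
  assert (Nba : norm (vsub b a) = s) by reflexivity.
  set (t := sqrt 3). assert (Ht : t * t = 3) by (apply sqrt_sqrt; lra).
  assert (Ht0 : 0 < t) by (apply sqrt_lt_R0; lra).
  assert (HK : Rabs (Kc a b c) = t * (s * s) / 2).
  { apply equi_K; try lra.
    - rewrite <- norm_sq. reflexivity.
    - rewrite <- norm_sq, Nca. reflexivity.
    - rewrite <- norm_sq, Ncb. reflexivity. }
  exists (s * t / 3). split.
  - apply combi; auto.
    + apply Rdiv_lt_0_compat; nra.
    + intros i Hi p Hp. unfold in_strip in Hp.
      destruct i as [|[|[|i]]]; try lia; unfold bis, vert, prev in *; simpl in *.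
      * apply (immersed_gen a b c p (s * t / 3) s t); auto.
      * apply (immersed_gen b c a p (s * t / 3) s t); auto. rewrite cyc1; auto.
      * apply (immersed_gen c a b p (s * t / 3) s t); auto. rewrite cyc2; auto.
    + intros p H0 H1 H2. unfold in_strip, vert in *; simpl in *.
      rewrite cross_unitv, Rabs_div_pos in H0, H1, H2 by (rewrite ?Nba, ?Ncb, ?Nac; lra).
      rewrite Nba in H0. rewrite Ncb in H1. rewrite Nac in H2.
      assert (Hsum : cross (vsub b a) (vsub p a) + cross (vsub c b) (vsub p b) + cross (vsub a c) (vsub p c) = Kc a b c)
        by (destruct a, b, c, p; unfold Kc, cross, vsub; simpl; ring).
      set (x := cross (vsub b a) (vsub p a)) in *. set (y := cross (vsub c b) (vsub p b)) in *.
      set (z := cross (vsub a c) (vsub p c)) in *.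
      assert (Rabs x < s * (s * t / 3 / 2)) by (apply (Rmult_lt_compat_r s) in H0; [|lra];
          replace (Rabs x / s * s) with (Rabs x) in H0 by (field; lra); lra).
      assert (Rabs y < s * (s * t / 3 / 2)) by (apply (Rmult_lt_compat_r s) in H1; [|lra];
          replace (Rabs y / s * s) with (Rabs y) in H1 by (field; lra); lra).
      assert (Rabs z < s * (s * t / 3 / 2)) by (apply (Rmult_lt_compat_r s) in H2; [|lra];
          replace (Rabs z / s * s) with (Rabs z) in H2 by (field; lra); lra).
      assert (Rabs (Kc a b c) <= Rabs x + Rabs y + Rabs z).
      { rewrite <- Hsum. eapply Rle_trans; [apply Rabs_triang|].
        pose proof (Rabs_triang x y). lra. }
      rewrite HK in *. nra.
    + intros k p Hk [l [_ ->]].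
      assert (Hw : s * t / 3 / 2 <= t * (s * s) / 2 / s).
      { replace (t * (s * s) / 2 / s) with (t * s / 2) by (field; lra). nra. }
      destruct k as [|[|[|k]]]; try lia; unfold in_strip, bis, vert, next, prev; simpl.
      * apply (fold_not_strip _ _ _ _ _ s); auto. rewrite cyc1, HK. auto.
      * apply (fold_not_strip _ _ _ _ _ s); auto. rewrite cyc2, HK. auto.
      * apply (fold_not_strip _ _ _ _ _ s); auto. fold (Kc a b c). rewrite HK. auto.
  - unfold ribbonlength, Defs.dist. rewrite Nab, Nbc, Nca.
    fold t. replace (s + s + s) with (3 * s) by ring.
    apply (Rmult_eq_reg_r (s * t / 3)); [|apply Rgt_not_eq; apply Rdiv_lt_0_compat; nra].
    replace (3 * s / (s * t / 3) * (s * t / 3)) with (3 * s) by (field; lra).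
    replace (3 * t * (s * t / 3)) with ((t * t) * s) by field. rewrite Ht. ring.
Qed.

Theorem theorem5p6 :
  (forall (a b c : pt) (w : R) (F : nat -> bool),
      same_type F -> allowed a b c w F -> 3 * sqrt 3 <= ribbonlength a b c w) /\
  (forall (a b c : pt) (F : nat -> bool),
      is_triangle a b c -> equilateral a b c -> same_type F ->
      exists w : R, allowed a b c w F /\ ribbonlength a b c w = 3 * sqrt 3).
Proof. split; [exact part1 | exact part2]. Qed.
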